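(* Let $K=2$, $M\ge2$, $N\ge1$, and let $c>0$, $\gamma>0$, $p>0$, $\sigma^2>0$. Define, for $k\in\{1,2\}$, $$\mathrm{SINR}_k^{(NL)}=\frac{p\big(c^2(MN^2+N^2+MN+N)+2c\gamma N(M+1)+\gamma^2(M+1)\big)}{p\big(c^2(N^2+MN)+2c\gamma N+\gamma^2\big)+\sigma^2(cN+\gamma)}$$ and $$\mathrm{SINR}_k^{(w)}=\frac{p(M+1)\gamma}{p\gamma+\sigma^2}.$$ Then $\mathrm{SINR}_k^{(NL)}>\mathrm{SINR}_k^{(w)}$ if and only if $$\frac{p}{\sigma^2}<\frac{N+1}{\gamma(M-1)}+\frac{1}{c(M-1)},$$ equivalently, if and only if $$N>\gamma\Big(\frac{p}{\sigma^2}(M-1)-\frac1c\Big)-1.$$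
   Context: $\mathrm{SINR}_k^{(NL)}$ is the approximate SINR of an RIS-aided massive MIMO system (MRC receiver) with pure-NLoS cascaded channels for two users with equal parameters $c_1=c_2=c$ (cascaded path-loss factor), $\gamma_1=\gamma_2=\gamma$ (direct-link path loss), and $p_1=p_2=p$ (transmit power). $\mathrm{SINR}_k^{(w)}$ is the corresponding approximate SINR without RIS. $M$ is the number of BS antennas, $N$ the number of RIS elements, and $\sigma^2$ the noise power. *)

(* Defs.v *)
From mathcomp Require Import all_boot all_order all_algebra.
Set Implicit Arguments. Unset Strict Implicit. Unset Printing Implicit Defensive.
Import Order.TTheory GRing.Theory Num.Theory.
Local Open Scope ring_scope.

(* Approximate SINR with pure-NLoS cascaded channels (K = 2, equal user
   parameters, so the value is the same for k = 1, 2).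
   M = #BS antennas, N = #RIS elements, c = cascaded path-loss factor,
   g = direct-link path loss, p = transmit power, s2 = noise power sigma^2. *)
Definition SINR_NL {R : realFieldType} (M N : nat) (c g p s2 : R) : R :=
  let M' := M%:R in let N' := N%:R in
  p * (c ^+ 2 * (M' * N' ^+ 2 + N' ^+ 2 + M' * N' + N')
       + 2 * c * g * N' * (M' + 1) + g ^+ 2 * (M' + 1))
  / (p * (c ^+ 2 * (N' ^+ 2 + M' * N') + 2 * c * g * N' + g ^+ 2)
     + s2 * (c * N' + g)).

Definition SINR_w {R : realFieldType} (M : nat) (g p s2 : R) : R :=
  p * (M%:R + 1) * g / (p * g + s2).

(* Main.v *)
Require Import Defs.
From mathcomp Require Import all_boot all_order all_algebra.
From mathcomp Require Import ring lra.
Import Order.TTheory GRing.Theory Num.Theory.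
Local Open Scope ring_scope.

Lemma divlt (R : realFieldType) (a b x y : R) : 0 < x -> 0 < y ->
  (a / x < b / y) = (a * y < b * x).
Proof.
move=> hx hy; rewrite ltr_pdivrMr // mulrAC ltr_pdivlMr //.
Qed.

Theorem corollary3 (R : realFieldType) (M N : nat) (c g p s2 : R) :
  (2 <= M)%N -> (1 <= N)%N -> 0 < c -> 0 < g -> 0 < p -> 0 < s2 ->
  (SINR_w M g p s2 < SINR_NL M N c g p s2 <->
     p / s2 < (N%:R + 1) / (g * (M%:R - 1)) + 1 / (c * (M%:R - 1)))
  /\
  (SINR_w M g p s2 < SINR_NL M N c g p s2 <->
     g * (p / s2 * (M%:R - 1) - 1 / c) - 1 < N%:R).
Proof.
move=> hM hN hc hg hp hs.
have hm : (2 : R) <= M%:R by rewrite (ler_nat R 2 M).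
have hn : (1 : R) <= N%:R by rewrite (ler_nat R 1 N).
rewrite /SINR_w /SINR_NL.
set m := M%:R; set n := N%:R.
have hm1 : 0 < m - 1 by lra.
have hn0 : 0 < n by lra.
have hpos : 0 < p * (c * n * (m + 1)) by
  apply: mulr_gt0 => //; apply: mulr_gt0; [apply: mulr_gt0|]; lra.
have key : (p * (m + 1) * g / (p * g + s2) <
   p * (c ^+ 2 * (m * n ^+ 2 + n ^+ 2 + m * n + n)
       + 2 * c * g * n * (m + 1) + g ^+ 2 * (m + 1))
  / (p * (c ^+ 2 * (n ^+ 2 + m * n) + 2 * c * g * n + g ^+ 2)
     + s2 * (c * n + g))) = (p * g * c * (m - 1) < s2 * (c * (n + 1) + g)).
  rewrite divlt; last first.
  - apply: addr_gt0; last by apply: mulr_gt0 => //; apply: addr_gt0 => //; apply: mulr_gt0.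
    apply: mulr_gt0 => //; apply: addr_gt0; last by apply: exprn_gt0.
    apply: addr_gt0; last by apply: mulr_gt0 => //; apply: mulr_gt0 => //;
      apply: mulr_gt0 => //; apply: mulr_gt0 => //; lra.
    apply: mulr_gt0; first by apply: exprn_gt0.
    apply: addr_gt0; [apply: exprn_gt0 | apply: mulr_gt0]; lra.
  - apply: addr_gt0 => //; exact: mulr_gt0.
  rewrite -subr_gt0 -[in RHS]subr_gt0.
  have -> : p * (c ^+ 2 * (m * n ^+ 2 + n ^+ 2 + m * n + n) +
       2 * c * g * n * (m + 1) + g ^+ 2 * (m + 1)) * (p * g + s2) -
     p * (m + 1) * g * (p * (c ^+ 2 * (n ^+ 2 + m * n) + 2 * c * g * n + g ^+ 2) +
      s2 * (c * n + g)) =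
     (p * (c * n * (m + 1))) * (s2 * (c * (n + 1) + g) - p * g * c * (m - 1)) by ring.
  by rewrite pmulr_rgt0.
rewrite key; split.
- have -> : (n + 1) / (g * (m - 1)) + 1 / (c * (m - 1))
     = (c * (n + 1) + g) / (g * c * (m - 1)).
    by field; rewrite ?mulf_neq0 //; lra.
  rewrite divlt //; last by apply: mulr_gt0 => //; apply: mulr_gt0.
  by rewrite [s2 * _]mulrC; split => H; lra.
- rewrite -(subr_lt0 n).
  have -> : g * (p / s2 * (m - 1) - 1 / c) - 1 - n
     = (p * g * c * (m - 1) - s2 * (c * (n + 1) + g)) / (s2 * c).
    by field; rewrite ?mulf_neq0 //; lra.
  have hi : 0 < (s2 * c)^-1 by rewrite invr_gt0; apply: mulr_gt0.
  by rewrite pmulr_llt0 // subr_lt0.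
Qed.
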